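(* Let $\mathfrak S=(S,\xrightarrow{F},\le)$ be an $\infty$-effective complete WSTS, and let $s_0\in S$ be bounded, i.e., such that $Post^*_{\mathfrak S}(s_0)$ is finite. Then the procedure $\mathbf{Clover}_{\mathfrak S}$ terminates on input $s_0$.
   Context: Complete WSTS: $(S,\le)$ a well partial order and continuous dcpo, $F$ a finite set of partial continuous maps (Scott-open domain, preserving lubs of directed subsets of the domain), $s\to f(s)$. $Post$: one-step successors; $Post^*$: reachability set. $F^*$: finite compositions of maps of $F$. Lub-acceleration: $\operatorname{dom}g^\infty=\operatorname{dom}g$, $g^\infty(x)=\bigvee_n g^n(x)$ if $x<g(x)$, else $g(x)$. $\infty$-effective: states finitely coded, $\le$ decidable, maps computable with decidable domains, each $g^\infty$ ($g\in F^*$) computable. Procedure $\mathbf{Clover}_{\mathfrak S}(s_0)$: $A\leftarrow\{s_0\}$; while $Post(A)\not\le^\flat A$ (where $B\le^\flat C$ iff $\downarrow B\subseteq\downarrow C$): choose fairly $(g,a)\in F^*\times A$ with $a\in\operatorname{dom}g$, set $A\leftarrow A\cup\{g^\infty(a)\}$; return $\operatorname{Max}A$. Fair: on every infinite execution, every pair $(g,a)$ with $a$ in the current $A$ and $a\in\operatorname{dom}g$ is picked later. *)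

(* Defs.v *)
From mathcomp Require Import all_boot.
Set Implicit Arguments. Unset Strict Implicit. Unset Printing Implicit Defensive.

Section Order.
Variables (S : Type) (le : rel S).

Definition is_ub (D : S -> Prop) (u : S) := forall d, D d -> le d u.
Definition is_lub (D : S -> Prop) (l : S) := is_ub D l /\ forall u, is_ub D u -> le l u.
Definition directed (D : S -> Prop) :=
  (exists d, D d) /\ forall x y, D x -> D y -> exists z, [/\ D z, le x z & le y z].

Definition partial_order := [/\ reflexive le, antisymmetric le & transitive le].
Definition wqo := forall f : nat -> S, exists i j, (i < j)%N /\ le (f i) (f j).
Definition well_partial_order := partial_order /\ wqo.

Definition dcpo := forall D, directed D -> exists l, is_lub D l.
Definition way_below (x y : S) :=
  forall D, directed D -> forall l, is_lub D l -> le y l -> exists d, D d /\ le x d.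
Definition continuous_dcpo :=
  dcpo /\ forall y, directed (fun x => way_below x y) /\ is_lub (fun x => way_below x y) y.

Definition scott_open (U : S -> Prop) :=
  (forall x y, U x -> le x y -> U y) /\
  forall D, directed D -> forall l, is_lub D l -> U l -> exists d, D d /\ U d.

Definition partial_continuous (dom : S -> Prop) (f : S -> S) :=
  scott_open dom /\
  forall D, directed D -> (forall d, D d -> dom d) ->
    forall l, is_lub D l -> is_lub (fun y => exists d, D d /\ y = f d) (f l).

Definition lt (x y : S) := le x y /\ x <> y.
End Order.

Section System.
Variables (S : Type) (le : rel S) (k : nat)
          (dom : 'I_k -> pred S) (app : 'I_k -> S -> S).

Definition step (x y : S) := exists f, dom f x /\ y = app f x.

Inductive reach (s0 : S) : S -> Prop :=
| reach_refl : reach s0 s0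
| reach_step x y : reach s0 x -> step x y -> reach s0 y.

Definition Post (A : S -> Prop) (y : S) := exists x, A x /\ step x y.
Definition down (A : S -> Prop) (x : S) := exists y, A y /\ le x y.
Definition le_flat (B C : S -> Prop) := forall x, down B x -> down C x.

(* F^* : the word [:: f1; ...; fn] denotes fn o ... o f1 (f1 applied first) *)
Fixpoint comp_dom (w : seq 'I_k) (x : S) : Prop :=
  if w is f :: w' then dom f x /\ comp_dom w' (app f x) else True.
Fixpoint comp_app (w : seq 'I_k) (x : S) : S :=
  if w is f :: w' then comp_app w' (app f x) else x.

Definition is_accel (w : seq 'I_k) (x y : S) :=
  (lt le x (comp_app w x) ->
     is_lub le (fun z => exists n, z = iter n (comp_app w) x) y) /\
  (~ lt le x (comp_app w x) -> y = comp_app w x).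

(* Executions of Clover: acc is the (computable) acceleration function;
   at step n the pair (gs n, as_ n) is chosen. *)
Variable acc : seq 'I_k -> S -> S.

Definition clover_set (s0 : S) (gs : nat -> seq 'I_k) (as_ : nat -> S) (n : nat) (x : S) :=
  x = s0 \/ exists m, (m < n)%N /\ x = acc (gs m) (as_ m).

Definition clover_infinite_fair_run (s0 : S) (gs : nat -> seq 'I_k) (as_ : nat -> S) :=
  (forall n, [/\ ~ le_flat (Post (clover_set s0 gs as_ n)) (clover_set s0 gs as_ n),
                 clover_set s0 gs as_ n (as_ n) & comp_dom (gs n) (as_ n)]) /\
  (forall i w a, clover_set s0 gs as_ i a -> comp_dom w a ->
     exists j, [/\ (i <= j)%N, gs j = w & as_ j = a]).

Definition clover_terminates (s0 : S) :=
  forall gs as_, ~ clover_infinite_fair_run s0 gs as_.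
End System.

(* Main.v *)
Require Import Defs.
From mathcomp Require Import all_boot.
From mathcomp Require Import zify.
From Stdlib Require Import Classical.
Set Implicit Arguments. Unset Strict Implicit.

Section Aux.
Variables (S : eqType) (le : rel S) (k : nat)
          (dom : 'I_k -> pred S) (app : 'I_k -> S -> S).
Hypothesis Hpo : partial_order le.
Hypothesis Hcont : forall f : 'I_k, partial_continuous le (fun x => dom f x) (app f).

Lemma app_mono f x y : dom f x -> le x y -> dom f y /\ le (app f x) (app f y).
Proof.
move=> dx lxy; case: Hpo => rf _ _.
have [[Hup _] Hl] := Hcont f.
have dy : dom f y by apply: (Hup x y).
split => //.
pose D := fun z => z = x \/ z = y.
have dD : directed le D.
  split; first by exists x; left.
  move=> a b Ha Hb; exists y; split; first by right.
    by case: Ha => ->.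
  by case: Hb => ->.
have lD : is_lub le D y.
  split; first by move=> d [->|->].
  by move=> u Hu; apply: Hu; right.
have dDd : forall d, D d -> dom f d by move=> d [->|->].
have [Hub _] := Hl D dD dDd y lD.
by apply: Hub; exists x; split => //; left.
Qed.

Lemma comp_mono w x y : comp_dom dom app w x -> le x y ->
  comp_dom dom app w y /\ le (comp_app app w x) (comp_app app w y).
Proof.
elim: w x y => [|f w IH] x y /=; first by [].
move=> [dx cx] lxy.
have [dy la] := app_mono dx lxy.
have [cy lc] := IH _ _ cx la.
by [].
Qed.

Lemma comp_reach s0 w x : reach dom app s0 x -> comp_dom dom app w x ->
  reach dom app s0 (comp_app app w x).
Proof.
elim: w x => [|f w IH] x //= rx [dx cx].
apply: IH => //; apply: reach_step rx _; by exists f.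
Qed.

Variable acc : seq 'I_k -> S -> S.
Hypothesis Hacc : forall w x, comp_dom dom app w x -> is_accel le app w x (acc w x).

Lemma acc_ge w a : comp_dom dom app w a -> le (comp_app app w a) (acc w a).
Proof.
move=> ca; have [H1 H2] := Hacc ca.
case: (classic (lt le a (comp_app app w a))) => Hl.
  have [Hub _] := H1 Hl; apply: Hub; by exists 1.
rewrite (H2 Hl); by case: Hpo.
Qed.

Lemma acc_reach (l : seq S) s0 w a :
  (forall x, reach dom app s0 x -> x \in l) ->
  reach dom app s0 a -> comp_dom dom app w a -> reach dom app s0 (acc w a).
Proof.
move=> Hl ra ca; have [H1 H2] := Hacc ca.
case: (classic (lt le a (comp_app app w a))) => Hlt; last first.
  by rewrite (H2 Hlt); apply: comp_reach.
have [Hub Hleast] := H1 Hlt.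
case: Hpo => rf asym tr.
set g := comp_app app w.
pose c n := iter n g a.
have Hch : forall n, comp_dom dom app w (c n) /\ le (c n) (c n.+1).
  elim=> [|n [cn ln]]; first by split => //; case: Hlt.
  have [c1 l1] := comp_mono cn ln; by split.
have Hr : forall n, reach dom app s0 (c n).
  elim=> [|n IH] //=; exact: comp_reach IH (proj1 (Hch n)).
have Hle : forall i j, (i <= j)%N -> le (c i) (c j).
  move=> i j /subnK <-; elim: (j - i) => [|d IH]; first by rewrite add0n.
  rewrite addSn; apply: tr IH (proj2 (Hch _)).
have [i Hi] : exists i, c i.+1 = c i.
  pose s := mkseq c (size l).+1.
  case Hu: (uniq s).
    have : (size s <= size l)%N.
      apply: uniq_leq_size => // x /mapP [n _ ->]; exact: Hl.
    by rewrite size_mkseq ltnn.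
  move/negbT: Hu => /(uniqPn a) [i [j [ij js]]].
  rewrite size_mkseq in js.
  rewrite !nth_mkseq; try lia.
  move=> eij; exists i; apply: asym; apply/andP; split.
    rewrite eij; apply: Hle; lia.
  exact: (proj2 (Hch i)).
have Hfix : forall n, c (n + i) = c i.
  elim=> [|n IH] //; rewrite addSn; change (g (c (n + i)) = c i).
  by rewrite IH; exact: Hi.
have ub : is_ub le (fun z => exists n, z = iter n g a) (c i).
  move=> d [n ->]; case: (leqP n i) => ni; first exact: Hle.
  have -> : n = (n - i) + i by lia.
  rewrite -/(c _) Hfix; exact: rf.
have -> : acc w a = c i.
  apply: asym; apply/andP; split; first exact: Hleast.
  apply: Hub; by exists i.
exact: Hr.
Qed.

Lemma stabilize (P : nat -> nat) B :
  (forall n m, (n <= m)%N -> (P n <= P m)%N) -> (forall n, (P n <= B)%N) ->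
  exists N, forall n, (N <= n)%N -> P n = P N.
Proof.
move=> Hm Hb.
suff H : forall d N, (B - P N <= d)%N -> exists N', forall n, (N' <= n)%N -> P n = P N'.
  exact: (H B 0 (leq_subr _ _)).
elim=> [|d IH] N HN.
  exists N => n Nn; have := Hm _ _ Nn; have := Hb n; lia.
case: (classic (forall n, (N <= n)%N -> P n = P N)) => Hc; first by exists N.
have [n Hn] := not_all_ex_not _ _ Hc.
have [Nn Pn] := imply_to_and _ _ Hn.
apply: (IH n); have := Hm _ _ Nn; have := Hb n; lia.
Qed.

End Aux.

Theorem lemma5p7 (S : countType) (le : rel S) (k : nat)
    (dom : 'I_k -> pred S) (app : 'I_k -> S -> S)
    (acc : seq 'I_k -> S -> S) (s0 : S) :
  well_partial_order le ->
  continuous_dcpo le ->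
  (forall f : 'I_k, partial_continuous le (fun x => dom f x) (app f)) ->
  (forall w x, comp_dom dom app w x -> is_accel le app w x (acc w x)) ->
  (exists l : seq S, forall x, reach dom app s0 x -> x \in l) ->
  clover_terminates le dom app acc s0.
Proof.
move=> [Hpo _] _ Hcont Hacc [l Hl] gs as_ [Hrun Hfair].
pose L n := s0 :: map (fun m => acc (gs m) (as_ m)) (iota 0 n).
have HL : forall n x, clover_set acc s0 gs as_ n x <-> x \in L n.
  move=> n x; rewrite inE; split.
    case=> [->|[m [mn ->]]]; first by rewrite eqxx.
    apply/orP; right; apply/mapP; exists m => //; rewrite mem_iota; lia.
  case/orP=> [/eqP->|/mapP [m]]; first by left.
  rewrite mem_iota => mn ->; right; exists m; split => //; lia.
have Hreach : forall n x, clover_set acc s0 gs as_ n x -> reach dom app s0 x.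
  elim=> [|n IH] x.
    by case=> [->|[m [//]]]; constructor.
  case=> [->|[m [mn ->]]]; first by constructor.
  rewrite ltnS leq_eqVlt in mn; case/orP: mn => [/eqP ->|mn].
    have [_ Ha Hc] := Hrun n.
    exact: (acc_reach Hpo Hcont Hacc Hl (IH _ Ha) Hc).
  apply: IH; right; by exists m.
have Hsub : forall n m, (n <= m)%N -> {subset L n <= L m}.
  move=> n m nm x /HL [->|[j [jn ->]]]; apply/HL; first by left.
  right; exists j; split => //; lia.
pose P n := size (undup (L n)).
have [N HN] : exists N, forall n, (N <= n)%N -> P n = P N.
  apply: (@stabilize P (size l)).
    move=> n m nm; apply: uniq_leq_size; first exact: undup_uniq.
    move=> x; rewrite !mem_undup; exact: Hsub.
  move=> n; apply: uniq_leq_size; first exact: undup_uniq.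
  move=> x; rewrite mem_undup => /HL Hx; exact: Hl (Hreach _ _ Hx).
have Hstab : forall n, (N <= n)%N -> {subset L n <= L N}.
  move=> n Nn x Hx.
  have Hs : {subset undup (L N) <= undup (L n)}.
    by move=> y; rewrite !mem_undup; exact: Hsub.
  have [_ Heq] := uniq_min_size (undup_uniq (L N)) Hs (eq_leq (HN n Nn)).
  by rewrite -mem_undup Heq mem_undup.
have [Hnf _ _] := Hrun N.
apply: Hnf => x [y [[z [Az [f [dz ->]]]] lxy]].
have cz : comp_dom dom app [:: f] z by [].
have [j [Nj gj aj]] := Hfair N [:: f] z Az cz.
exists (acc [:: f] z); split.
  apply/HL; apply: (Hstab j.+1); first lia.
  apply/HL; right; exists j; split => //; by rewrite gj aj.
have [_ _ tr] := Hpo; apply: tr lxy _.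
exact: (acc_ge Hpo Hacc cz).
Qed.
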